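(* The class $\mathcal M_2$ of $2$-modular matroids is closed under duality: if $M\in\mathcal M_2$ then $M^*\in\mathcal M_2$.
   Context: An integer matrix $A$ is $\Delta$-modular if the determinant of every $\operatorname{rank}(A)\times\operatorname{rank}(A)$ submatrix has absolute value at most $\Delta$. $\mathcal M_\Delta$ is the class of matroids that are isomorphic to the vector matroid over $\mathbb{R}$ of the columns of some $\Delta$-modular matrix. *)

(* Defs.v *)
From Stdlib Require Import Reals.
From HB Require Import structures.
From mathcomp Require Import all_boot all_order all_algebra.
From mathcomp Require Import Rstruct.
Set Implicit Arguments. Unset Strict Implicit. Unset Printing Implicit Defensive.
Import Order.TTheory GRing.Theory Num.Theory.
Local Open Scope ring_scope.

Definition is_matroid (E : finType) (I : {set {set E}}) : Prop :=
  [/\ set0 \in I,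
      (forall X Y : {set E}, Y \in I -> X \subset Y -> X \in I) &
      (forall X Y : {set E}, X \in I -> Y \in I -> (#|X| < #|Y|)%N ->
         exists2 e, e \in Y :\: X & e |: X \in I)].

Definition bases (E : finType) (I : {set {set E}}) : {set {set E}} :=
  [set B in I | [forall X in I, (B \subset X) ==> (X == B)]].

(* Dual matroid: its bases are the complements of the bases of M, so its
   independent sets are the subsets of complements of bases of M. *)
Definition dual (E : finType) (I : {set {set E}}) : {set {set E}} :=
  [set X : {set E} | [exists B in bases I, X \subset ~: B]].

Definition realmx (m n : nat) (A : 'M[int]_(m, n)) : 'M[R]_(m, n) :=
  map_mx (fun z : int => z%:~R) A.

Definition Delta_modular (Delta : nat) (m n : nat) (A : 'M[int]_(m, n)) : Prop :=
  forall (f : 'I_(\rank (realmx A)) -> 'I_m) (g : 'I_(\rank (realmx A)) -> 'I_n),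
    injective f -> injective g ->
    (`|\det (mxsub f g A)| <= Delta%:Z)%R.

Definition represents (E : finType) (I : {set {set E}}) (m n : nat)
    (A : 'M[int]_(m, n)) (h : E -> 'I_n) : Prop :=
  bijective h /\
  forall X : {set E},
    X \in I <-> free [seq col (h x) (realmx A) | x <- enum X].

(* The class M_Delta (closed under isomorphism via the bijection h). *)
Definition in_MDelta (Delta : nat) (E : finType) (I : {set {set E}}) : Prop :=
  exists (m n : nat) (A : 'M[int]_(m, n)) (h : E -> 'I_n),
    Delta_modular Delta A /\ represents I A h.

(* Main.v *)
From Stdlib Require Import Reals.
Require Import Defs.
From mathcomp Require Import all_boot all_order all_algebra.
From mathcomp Require Import Rstruct.
From mathcomp Require Import zify ring lra.
Set Implicit Arguments. Unset Strict Implicit. Unset Printing Implicit Defensive.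
Import Order.TTheory GRing.Theory Num.Theory.
Local Open Scope ring_scope.

Definition sel (n p : nat) (s : 'I_p -> 'I_n) : 'M[R]_(n, p) :=
  \matrix_(a, l) ((a == s l)%:R).

Lemma mxsub_sel (m n p q : nat) (f : 'I_p -> 'I_m) (g : 'I_q -> 'I_n) (M : 'M[R]_(m,n)) :
  mxsub f g M = (sel f)^T *m M *m sel g.
Proof.
apply/matrixP => i j; rewrite !mxE (bigD1 (g j)) //= big1 => [|k /negbTE kn]; last first.
  by rewrite !mxE kn mulr0.
rewrite addr0 !mxE eqxx mulr1 (bigD1 (f i)) //= big1 => [|k /negbTE kn]; last first.
  by rewrite !mxE kn mul0r.
by rewrite addr0 !mxE eqxx mul1r.
Qed.

Lemma selTsel (n p q : nat) (s : 'I_p -> 'I_n) (s' : 'I_q -> 'I_n) :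
  (sel s)^T *m sel s' = \matrix_(l, l') ((s l == s' l')%:R).
Proof.
apply/matrixP => i j; rewrite !mxE (bigD1 (s i)) //= big1 => [|k /negbTE kn]; last first.
  by rewrite !mxE kn mul0r.
by rewrite addr0 !mxE eqxx mul1r.
Qed.

Lemma selTsel_inj (n p : nat) (s : 'I_p -> 'I_n) : injective s -> (sel s)^T *m sel s = 1%:M.
Proof.
move=> si; rewrite selTsel; apply/matrixP => i j; rewrite !mxE.
by rewrite (inj_eq si).
Qed.

Lemma selTsel_disj (n p q : nat) (s : 'I_p -> 'I_n) (s' : 'I_q -> 'I_n) :
  (forall l l', s l != s' l') -> (sel s)^T *m sel s' = 0.
Proof.
move=> d; rewrite selTsel; apply/matrixP => i j; rewrite !mxE.
by rewrite (negbTE (d i j)).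
Qed.

Lemma selselT (n p : nat) (s : 'I_p -> 'I_n) : injective s ->
  sel s *m (sel s)^T = \matrix_(a, b) (((a == b) && (a \in codom s))%:R).
Proof.
move=> si; apply/matrixP => a b; rewrite !mxE.
case: (boolP (a \in codom s)) => [/codomP [l ->]|na].
  rewrite (bigD1 l) //= big1 => [|k kl]; last first.
    rewrite !mxE; case: eqP => [/si e|_]; last by rewrite mul0r.
    by rewrite e eqxx in kl.
  by rewrite addr0 !mxE eqxx mul1r andbT eq_sym.
rewrite andbF big1 // => k _; rewrite !mxE; case: eqP => [e|_]; last by rewrite mul0r.
by case/negP: na; rewrite e codom_f.
Qed.

Lemma perm_sel (n p q : nat) (s : 'I_p -> 'I_n) (s' : 'I_q -> 'I_n) :
  injective s -> injective s' -> (forall l l', s l != s' l') ->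
  (forall a, (a \in codom s) || (a \in codom s')) ->
  let P := row_mx (sel s) (sel s') in P *m P^T = 1%:M /\ P^T *m P = 1%:M.
Proof.
move=> si si' d c P; split.
  rewrite /P tr_row_mx mul_row_col !selselT //; apply/matrixP => a b; rewrite !mxE.
  case: eqP => [->|]; last by rewrite !andFb addr0.
  have := c b; case: (boolP (b \in codom s)) => [/codomP [l ->]|_] /=.
    case: (boolP (_ \in codom s')) => [/codomP [l' e]|_]; last by rewrite addr0.
    by have := d l l'; rewrite e eqxx.
  by move=> ->; rewrite add0r.
rewrite /P tr_row_mx mul_col_row !selTsel_inj // !selTsel_disj //.
  by rewrite -scalar_mx_block.
by move=> l l'; rewrite eq_sym.
Qed.

Definition freeS m n (M : 'M[R]_(m,n)) (P : {set 'I_n}) : Prop :=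
  forall c : 'cV[R]_n, (forall a, a \notin P -> c a 0 = 0) -> M *m c = 0 -> c = 0.

Lemma free_freeS m n (M : 'M[R]_(m,n)) (s : seq 'I_n) : uniq s ->
  free [seq col j M | j <- s] <-> freeS M [set j in s].
Proof.
move=> us; set t := in_tuple s.
have ti : injective (tnth t) by apply/tuple_uniqP.
pose cv (k : 'I_(size s) -> R) : 'cV[R]_n := \sum_i k i *: delta_mx (tnth t i) 0.
have F1 k : \sum_(i < size s) k i *: [seq col j M | j <- s]`_i = M *m cv k.
  rewrite mulmx_sumr; apply: eq_bigr => i _; rewrite -scalemxAr -colE.
  by rewrite (nth_map (tnth t i)) ?size_tuple // [in RHS](tnth_nth (tnth t i)).

have F2 k a : cv k a 0 = \sum_i k i * (a == tnth t i)%:R.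
  by rewrite /cv summxE; apply: eq_bigr => i _; rewrite !mxE eqxx andbT.
have F3 k i : cv k (tnth t i) 0 = k i.
  rewrite F2 (bigD1 i) //= big1 ?addr0 ?eqxx ?mulr1 // => l li.
  by rewrite (inj_eq ti) eq_sym (negbTE li) mulr0.
have F4 k a : a \notin s -> cv k a 0 = 0.
  move=> as_; rewrite F2 big1 // => i _; case: eqP => [e|]; last by rewrite mulr0.
  by case/negP: as_; rewrite e; apply: mem_tnth.
have F5 (c : 'cV[R]_n) : (forall a, a \notin [set j in s] -> c a 0 = 0) -> c = cv (fun i => c (tnth t i) 0).
  move=> cs; apply/matrixP => a b; rewrite (ord1 b).
  case: (boolP (a \in s)) => [/(tnthP t) [i ->]|na]; first by rewrite F3.
  by rewrite F4 // cs // inE.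
have FP := @freeP _ _ _ (map_tuple (fun j => col j M) t).
split.
  move=> fr c cs Mc; rewrite (F5 c cs).
  have := (elimT FP fr) (fun i => c (tnth t i) 0).
  rewrite F1 -(F5 c cs) => /(_ Mc) k0.
  apply/matrixP => a b; rewrite (ord1 b) {1}(F5 c cs) F2 mxE big1 // => i _.
  by rewrite k0 mul0r.
move=> fS; apply/FP => k; rewrite F1 => Mk i.
have := fS (cv k); rewrite -F3 => -> //.
- by rewrite mxE.
- by move=> a; rewrite inE => /F4 ->.
Qed.

Definition Span m n (M : 'M[R]_(m,n)) (Z : {set 'I_n}) : Prop :=
  forall u : 'rV[R]_m, (forall a, a \in Z -> (u *m M) 0 a = 0) -> u *m M = 0.

Lemma L1 m n (M : 'M[R]_(m,n)) (P : {set 'I_n}) (j : 'I_n) :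
  freeS M P -> ~ freeS M (j |: P) ->
  forall u : 'rV[R]_m, (forall a, a \in P -> (u *m M) 0 a = 0) -> (u *m M) 0 j = 0.
Proof.
move=> fP nf u uP.
have [c [cs [Mc cn0]]] : exists c : 'cV[R]_n,
    [/\ (forall a, a \notin j |: P -> c a 0 = 0), M *m c = 0 & c <> 0].
  apply: Classical_Prop.NNPP => H; apply: nf => c cs Mc.
  apply: Classical_Prop.NNPP => cn; apply: H; exists c; split => //.
have cj : c j 0 != 0.
  apply/eqP => cj0; apply: cn0; apply: fP => // a aP.
  case: (a =P j) => [->//|aj]; apply: cs; rewrite !inE negb_or aP andbT.
  exact/eqP.
have : ((u *m M) *m c) 0 0 = 0 by rewrite -mulmxA Mc mulmx0 mxE.
rewrite mxE (bigD1 j) //= big1 ?addr0 => [/eqP|a aj].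
  by rewrite mulf_eq0 (negbTE cj) orbF => /eqP.
case: (boolP (a \in P)) => [/uP ->|aP]; first by rewrite mul0r.
by rewrite cs ?mulr0 // !inE negb_or aj.
Qed.

Lemma L2 m n (M : 'M[R]_(m,n)) (P : {set 'I_n}) (j : 'I_n) :
  freeS M (j |: P) -> j \notin P ->
  (forall u : 'rV[R]_m, (forall a, a \in P -> (u *m M) 0 a = 0) -> (u *m M) 0 j = 0) ->
  False.
Proof.
move=> fP jP H.
pose D : 'M[R]_n := diag_mx (\row_a ((a \in P)%:R)).
pose N := M *m D.
have H' (u : 'rV[R]_m) : u *m N = 0 -> u *m col j M = 0.
  move=> uN; rewrite colE mulmxA -colE; apply/matrixP => x y.
  rewrite (ord1 x) (ord1 y) mxE [RHS]mxE; apply: H => a aP.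
  have : (u *m N) 0 a = 0 by rewrite uN mxE.
  by rewrite /N mulmxA mul_mx_diag !mxE aP mulr1.
set K := cokermx N^T.
have NK : N^T *m K = 0 := mulmx_coker _.
have cK : (col j M)^T *m K = 0.
  apply: trmx_inj; rewrite trmx_mul trmxK trmx0.
  apply/row_matrixP => l; rewrite row_mul row0; apply: H'.
  rewrite -row_mul (_ : K^T *m N = 0) ?row0 //.
  by rewrite -[N]trmxK -trmx_mul NK trmx0.
have : ((col j M)^T <= N^T)%MS by rewrite submxE cK.
case/submxP => w /(congr1 trmx); rewrite trmxK trmx_mul trmxK => ew.
pose c : 'cV[R]_n := D *m w^T - delta_mx j 0.
have Dv a : c a 0 = (a \in P)%:R * w 0 a - (a == j)%:R.
  by rewrite /c mxE mul_diag_mx !mxE andbT.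
have Mc : M *m c = 0.
  by rewrite /c mulmxBr mulmxA -/N -ew -colE subrr.
have cs : forall a, a \notin j |: P -> c a 0 = 0.
  move=> a; rewrite !inE negb_or => /andP [aj aP].
  by rewrite Dv (negbTE aP) mul0r (negbTE aj) subrr.
have := congr1 (fun M : 'cV[R]_n => M j 0) (fP c cs Mc).
rewrite Dv mxE (negbTE jP) mul0r !eqxx /= sub0r.
by move/eqP; rewrite oppr_eq0 oner_eq0.
Qed.

Lemma dual_span (E : finType) (I : {set {set E}}) m n (M : 'M[R]_(m,n)) (h : E -> 'I_n) :
  is_matroid I -> bijective h -> (forall X, X \in I <-> freeS M (h @: X)) ->
  forall X, X \in dual I <-> Span M (~: (h @: X)).
Proof.
move=> [I0 Isub _] hb hI X.
have hinj := bij_inj hb.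
have hsurj a : exists x, a = h x by case: hb => g _ hg; exists (g a); rewrite hg.
have memh (x : E) (S : {set E}) : (h x \in h @: S) = (x \in S) by rewrite mem_imset.
split.
  rewrite inE => /existsP [B /andP [Bb XB]] u uX.
  move: Bb; rewrite inE => /andP [BI /forallP Bmax].
  have zB a : a \in h @: B -> (u *m M) 0 a = 0.
    case/imsetP => y yB ->; apply: uX; rewrite inE memh.
    by apply/negP => /(subsetP XB); rewrite inE yB.
  apply/matrixP => i a; rewrite (ord1 i) [RHS]mxE.
  have [x ->] := hsurj a.
  case: (boolP (x \in B)) => [xB|xB]; first by apply: zB; rewrite memh.
  apply: (L1 (P := h @: B)) => //; first by apply/hI.
  rewrite -imsetU1 => /hI xBI.
  have := Bmax (x |: B); rewrite xBI /= subsetUr /= => /eqP e.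
  by move: xB; rewrite -e !inE eqxx.
move=> sp.
pose Pr := fun B : {set E} => (B \subset ~: X) && (B \in I).
have P0 : Pr set0 by rewrite /Pr sub0set I0.
have [B /maxsetP [/andP [BX BI] Bmax] _] := maxset_exists P0.
have zero (u : 'rV[R]_m) : (forall a, a \in h @: B -> (u *m M) 0 a = 0) -> u *m M = 0.
  move=> zB; apply: sp => a; have [y ->] := hsurj a; rewrite inE memh => yX.
  case: (boolP (y \in B)) => [yB|yB]; first by apply: zB; rewrite memh.
  apply: (L1 (P := h @: B)) => //; first by apply/hI.
  rewrite -imsetU1 => /hI yBI.
  have := Bmax (y |: B); rewrite /Pr yBI andbT subUset sub1set inE yX BX subsetUr.
  by move=> /(_ isT isT) e; move: yB; rewrite -e !inE eqxx.
rewrite inE; apply/existsP; exists B; rewrite subsetC BX andbT inE BI /=.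
apply/forallP => X'; apply/implyP => X'I; apply/implyP => BX'.
rewrite eqEsubset BX' andbT; apply: Classical_Prop.NNPP => /negP /subsetPn [x xX' xB].
have xBI : x |: B \in I by apply: (Isub _ X') => //; rewrite subUset sub1set xX'.
move/hI: xBI; rewrite imsetU1 => fr.
apply: (L2 fr); first by rewrite memh.
move=> u uB; by rewrite (zero u uB) mxE.
Qed.

Lemma span_dual m n r (M : 'M[R]_(m,n)) (C : 'M[R]_(r,n)) (G : 'M[R]_(n,r))
  (K : 'M[R]_(m,r)) (J : 'M[R]_(r,m)) :
  M = K *m C -> C = J *m M -> C *m G = 1%:M ->
  forall Y, freeS (1%:M - G *m C)^T Y <-> Span M (~: Y).
Proof.
move=> MK CJ CG Y.
have CQ : C *m (1%:M - G *m C) = 0 by rewrite mulmxBr mulmx1 mulmxA CG mul1mx subrr.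
split.
  move=> fr u uY.
  have c0 : (u *m M)^T = 0.
    apply: fr.
      by move=> a aY; rewrite mxE; apply: uY; rewrite inE.
    by rewrite -trmx_mul MK !mulmxA -(mulmxA _ C) CQ mulmx0 trmx0.
  by rewrite -[u *m M]trmxK c0 trmx0.
move=> sp c cs Qc.
have e : c^T = c^T *m G *m J *m M.
  have : c^T *m (1%:M - G *m C) = 0 by rewrite -[c^T *m _]trmxK trmx_mul trmxK Qc trmx0.
  by rewrite mulmxBr mulmx1 -!mulmxA -CJ => /eqP; rewrite subr_eq0 => /eqP.
have : c^T *m G *m J *m M = 0.
  apply: sp => a aY; rewrite -e mxE; apply: cs; by rewrite inE in aY.
by rewrite -e => /(congr1 trmx); rewrite trmxK trmx0.
Qed.

Lemma rank_dual n r (C : 'M[R]_(r,n)) (G : 'M[R]_(n,r)) :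
  C *m G = 1%:M -> (\rank (1%:M - G *m C)^T + r)%N = n.
Proof.
move=> CG; rewrite mxrank_tr.
have rG : \rank G = r.
  apply/eqP; rewrite eqn_leq rank_leq_col /=.
  by rewrite -{1}(mxrank1 R r) -CG mxrankM_maxr.
have QG : (1%:M - G *m C) *m G = 0 by rewrite mulmxBl mul1mx -mulmxA CG mulmx1 subrr.
have h1 := mxrank_mul_min (1%:M - G *m C) G; rewrite QG mxrank0 rG in h1.
have e1 : (1%:M - G *m C) + G *m C = 1%:M :> 'M[R]_n by rewrite subrK.
have h2 := mxrank_add (1%:M - G *m C) (G *m C); rewrite e1 mxrank1 in h2.
have h3 := mxrankM_maxl G C; rewrite rG in h3.
move: h1 h2 h3; set a := \rank (1%:M - G *m C)%R; set b := \rank (G *m C); lia.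
Qed.

Lemma detIcol r (M : 'M[R]_r) (i : 'I_r) :
  (forall l l', l' != i -> M l l' = (l == l')%:R) -> \det M = M i i.
Proof.
move=> HM; rewrite (expand_det_col M i) (bigD1 i) //= big1 ?addr0 => [|l li].
  rewrite /cofactor (_ : row' i (col' i M) = 1%:M) ?det1 ?mulr1.
    by rewrite -signr_odd addnn odd_double expr0 mulr1.
  apply/matrixP => p q; rewrite !mxE HM; last by rewrite eq_sym neq_lift.
  by rewrite (inj_eq lift_inj).
rewrite /cofactor.
have [p ep _] := unlift_some (negbT (negbTE li)).
rewrite (expand_det_row _ p) big1 ?mulr0 // => q _.
rewrite !mxE -ep HM; last by rewrite eq_sym neq_lift.
by rewrite (negbTE (neq_lift _ _)) mul0r.
Qed.

Lemma mul_sel m n p (M : 'M[R]_(m,n)) (s : 'I_p -> 'I_n) x y : (M *m sel s) x y = M x (s y).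
Proof.
rewrite !mxE (bigD1 (s y)) //= big1 ?addr0 => [|k ks]; first by rewrite mxE eqxx mulr1.
by rewrite mxE (negbTE ks) mulr0.
Qed.

Lemma cover_lemma n p q (s : 'I_p -> 'I_n) (s' : 'I_q -> 'I_n) :
  injective s -> injective s' -> (forall l l', s l != s' l') -> (p + q = n)%N ->
  forall a, (a \in codom s) || (a \in codom s').
Proof.
move=> si si' d e a; apply: Classical_Prop.NNPP => /negP; rewrite negb_or => /andP [na na'].
pose S := [set x in codom s]; pose S' := [set x in codom s'].
have cS : #|S| = p by rewrite cardsE card_codom // card_ord.
have cS' : #|S'| = q by rewrite cardsE card_codom // card_ord.
have cI : #|S :&: S'| = 0%N.
  apply/eqP; rewrite cards_eq0; apply/eqP/setP => x; rewrite !inE.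
  apply/negP => /andP [/codomP [l ->] /codomP [l' e']].
  by have := d l l'; rewrite e' eqxx.
have : (#|S :|: S'| < #|'I_n|)%N.
  rewrite -cardsT; apply: proper_card; rewrite properEneq subsetT andbT.
  apply/negP => /eqP /setP /(_ a); rewrite !inE.
  by rewrite (negbTE na) (negbTE na').
rewrite cardsU cS cS' cI card_ord; lia.
Qed.

Lemma minor_bound n r k (C : 'M[R]_(r,n)) (g0 : 'I_r -> 'I_n) (f g : 'I_k -> 'I_n) :
  injective g0 -> injective f -> injective g -> (k + r = n)%N -> C *m sel g0 = 1%:M ->
  exists t : 'I_r -> 'I_n, injective t /\
    `|\det (mxsub f g (1%:M - sel g0 *m C)^T)| <= `|\det (C *m sel t)|.
Proof.
move=> g0i fi gi ekr CG.
set G := sel g0; set Q : 'M[R]_n := 1%:M - G *m C.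
have QG : Q *m G = 0 by rewrite /Q mulmxBl mul1mx -mulmxA CG mulmx1 subrr.
have CQ : C *m Q = 0 by rewrite /Q mulmxBr mulmx1 mulmxA CG mul1mx subrr.
case: (boolP [exists b, f b \in codom g0]) => [/existsP [b /codomP [i fbi]]|nf].
  exists g0; split => //.
  rewrite (expand_det_row _ b) big1 ?normr0 ?normr_ge0 // => l _.
  have -> : mxsub f g Q^T b l = Q (g l) (g0 i) by rewrite mxE mxE fbi.
  have := mul_sel Q g0 (g l) i; rewrite QG mxE => <-.
  by rewrite mul0r.
have fd : forall b l, f b != g0 l.
  move=> b l; apply/eqP => e; case/existsP: nf; exists b; rewrite e; exact: codom_f.
set T := ~: [set g l | l in 'I_k].
have cT : r = #|T|.
  have := cardsC [set g l | l in 'I_k]; rewrite card_imset // !card_ord -/T; lia.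
pose t (l : 'I_r) : 'I_n := enum_val (cast_ord cT l).
have ti : injective t by move=> x y /enum_val_inj /cast_ord_inj.
have td : forall l l', t l != g l'.
  move=> l l'; have := enum_valP (cast_ord cT l); rewrite -/(t l) inE.
  by apply: contra => /eqP ->; apply: imset_f.
have erk : (r + k = n)%N by rewrite addnC.
have fd' : forall l b, g0 l != f b by move=> l b; rewrite eq_sym.
have [Pss Pst] := perm_sel g0i fi fd'
  (cover_lemma g0i fi fd' erk).
have [Ptt Ptt'] := perm_sel ti gi td (cover_lemma ti gi td erk).
set Ps := row_mx G (sel f) in Pss Pst.
set Pt := row_mx (sel t) (sel g) in Ptt Ptt'.
set X1 := col_mx C (sel g)^T.
set V := row_mx G (Q *m sel f).
exists t; split => //.
have E1 : \det (X1 *m V) = \det (mxsub f g Q^T).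
  rewrite /X1 /V mul_col_row CG (mulmxA C Q) CQ mul0mx det_lblock det1 mul1r.
  by rewrite mxsub_sel -[RHS]det_tr !trmx_mul !trmxK mulmxA.
have E2 : X1 *m V = (X1 *m Pt) *m ((Pt^T *m Ps) *m (Ps^T *m V)).
  by rewrite !mulmxA -(mulmxA X1) Ptt mulmx1 -(mulmxA _ Ps) Pss mulmx1.
have E3 : \det (X1 *m Pt) = \det (C *m sel t).
  rewrite /X1 /Pt mul_col_row selTsel_inj // selTsel_disj; last first.
    by move=> l l'; rewrite eq_sym.
  by rewrite det_ublock det1 mulr1.
have E4 : \det (Ps^T *m V) = 1.
  rewrite /Ps /V tr_row_mx mul_col_row selTsel_inj // selTsel_disj //.
  have -> : (sel f)^T *m (Q *m sel f) = 1%:M.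
    rewrite /Q mulmxBl mul1mx mulmxBr selTsel_inj // !mulmxA selTsel_disj //.
    by rewrite !mul0mx subr0.
  by rewrite det_ublock !det1 mulr1.
have E5 : `|\det (Pt^T *m Ps)| = 1.
  have : \det (Pt^T *m Ps) * \det (Pt^T *m Ps) = 1.
    rewrite -{2}det_tr -det_mulmx !trmx_mul trmxK mulmxA -(mulmxA _ Ps) Pss mulmx1.
    by rewrite Ptt' det1.
  move/(congr1 Num.norm); rewrite normrM normr1.
  have := normr_ge0 (\det (Pt^T *m Ps)); set y := `|_|; nra.
rewrite -E1 E2 det_mulmx det_mulmx E3 E4 mulr1 normrM E5 mulr1.
by [].
Qed.

Lemma rdet n (M : 'M[int]_n) : \det (Defs.realmx M) = (\det M)%:~R.
Proof. by rewrite /Defs.realmx (det_map_mx (intr : {rmorphism int -> R})). Qed.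

Lemma rsub m n (M : 'M[int]_(m,n)) p q (f : 'I_p -> 'I_m) (g : 'I_q -> 'I_n) :
  Defs.realmx (mxsub f g M) = mxsub f g (Defs.realmx M).
Proof. by rewrite /Defs.realmx map_mxsub. Qed.

Lemma rQ n r (X : 'M[int]_(n,r)) (Y : 'M[int]_(r,n)) :
  Defs.realmx ((1%:M - X *m Y)^T) = (1%:M - Defs.realmx X *m Defs.realmx Y)^T.
Proof.
rewrite /Defs.realmx -map_trmx.
rewrite (map_mxB (intr : {rmorphism int -> R})) (map_mx1 (intr : {rmorphism int -> R})).
by rewrite (map_mxM (intr : {rmorphism int -> R})).
Qed.

Lemma choose_basis m n (A : 'M[int]_(m,n)) :
  exists (f0 : 'I_(\rank (Defs.realmx A)) -> 'I_m) (g0 : 'I_(\rank (Defs.realmx A)) -> 'I_n),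
  [/\ injective f0, injective g0, mxsub f0 g0 (Defs.realmx A) \in unitmx &
   (`|\det (mxsub f0 g0 A)| = 1 \/
    forall (f : 'I_(\rank (Defs.realmx A)) -> 'I_m) (g : 'I_(\rank (Defs.realmx A)) -> 'I_n),
      injective f -> injective g -> `|\det (mxsub f g A)| != 1)].
Proof.
case: (Classical_Prop.classic (exists (f : 'I_(\rank (Defs.realmx A)) -> 'I_m)
   (g : 'I_(\rank (Defs.realmx A)) -> 'I_n), [/\ injective f, injective g & `|\det (mxsub f g A)| = 1])).
  move=> [f [g [fi gi d1]]]; exists f, g; split => //; last by left.
  rewrite unitmxE unitfE -rsub rdet intr_eq0; apply/eqP => d0.
  by rewrite d0 normr0 in d1.
move=> H.
set Ar := Defs.realmx A.
have fA : row_full (rowsub (maxrankfun Ar) Ar)^T.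
  by rewrite /row_full mxrank_tr; exact: maxrowsub_free.
exists (maxrankfun Ar), (fullrankfun fA); split.
- exact: maxrankfun_inj.
- exact: fullrankfun_inj.
- rewrite -unitmx_tr (_ : _^T = rowsub (fullrankfun fA) (rowsub (maxrankfun Ar) Ar)^T).
    exact: fullrowsub_unit.
  by apply/matrixP => i j; rewrite !mxE.
- right => f g fi gi; apply/eqP => e; apply: H; exists f, g; by split.
Qed.

Lemma construct m n (A : 'M[int]_(m,n))
  (f0 : 'I_(\rank (Defs.realmx A)) -> 'I_m) (g0 : 'I_(\rank (Defs.realmx A)) -> 'I_n) :
  Delta_modular 2 A -> injective f0 -> injective g0 ->
  mxsub f0 g0 (Defs.realmx A) \in unitmx ->
  (`|\det (mxsub f0 g0 A)| = 1 \/
    forall (f : 'I_(\rank (Defs.realmx A)) -> 'I_m) (g : 'I_(\rank (Defs.realmx A)) -> 'I_n),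
      injective f -> injective g -> `|\det (mxsub f g A)| != 1) ->
  exists A' : 'M[int]_(n,n), Delta_modular 2 A' /\
    forall Y, freeS (Defs.realmx A') Y <-> Span (Defs.realmx A) (~: Y).
Proof.
move=> DA f0i g0i A0u PD.
set Ar := Defs.realmx A in PD A0u *.
set r := \rank Ar in PD A0u *.
set A0 := mxsub f0 g0 Ar in A0u.
set Rw := (sel f0)^T *m Ar.
set G := sel g0.
set C := invmx A0 *m Rw.
have A0e : A0 = Rw *m G by rewrite /A0 mxsub_sel.
have CG : C *m G = 1%:M by rewrite /C -mulmxA -A0e mulVmx.
have RC : A0 *m C = Rw by rewrite /C mulmxA mulmxV // mul1mx.
have CJ : C = (invmx A0 *m (sel f0)^T) *m Ar by rewrite /C /Rw mulmxA.
have [K MK] : exists K, Ar = K *m C.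
  have sRA : (Rw <= Ar)%MS := submxMl _ _.
  have rR : \rank Rw = r.
    apply/eqP; rewrite eqn_leq mxrankM_maxr /=.
    by rewrite -{1}(mxrank_unit A0u) A0e mxrankM_maxl.
  have : (Ar <= Rw)%MS by rewrite -(mxrank_leqif_sup sRA).2 rR.
  case/submxP => L ->; exists (L *m A0).
  by rewrite -mulmxA RC.
have key t : \det (mxsub f0 t Ar) = \det A0 * \det (C *m sel t).
  by rewrite mxsub_sel -/Rw -RC -mulmxA det_mulmx.
set d0 := \det (mxsub f0 g0 A) in PD.
have d0e : \det A0 = d0%:~R by rewrite /A0 /Ar -rsub rdet.
have d0n : d0 != 0.
  by move: A0u; rewrite unitmxE unitfE d0e intr_eq0.
have d0b : `|d0| <= 2 := DA f0 g0 f0i g0i.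
have Cint i j : exists z : int, z%:~R = C i j.
  pose t := fun l => if l == i then j else g0 l.
  have Ct : \det (C *m sel t) = C i j.
    rewrite (detIcol (i:=i)) => [|l l' l'i]; rewrite mul_sel /t ?eqxx //.
    rewrite (negbTE l'i); have := mul_sel C g0 l l'; rewrite CG mxE => <-.
    by [].
  set D := \det (mxsub f0 t A).
  have De : D%:~R = d0%:~R * C i j by rewrite -Ct -d0e -key /Ar -rsub rdet.
  have [e eD] : exists e : int, D = e * d0.
    case: PD => [d1|noone].
      exists (D * d0); have : d0 * d0 = 1.
        by rewrite -[d0 * d0]ger0_norm ?normrM ?d1 ?mulr1 // -expr2 sqr_ge0.
      by rewrite -mulrA => ->; rewrite mulr1.
    have d2 : `|d0| = 2.
      have := noone f0 g0 f0i g0i; rewrite -/d0 => h1; move: d0n d0b h1; lia.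
    have tinj : injective t \/ C i j = 0.
      case: (boolP (j \in codom g0)) => [/codomP [y ey]|nj].
        case: (y =P i) => [yi|yi].
          left => x z; rewrite /t ey yi.
          by case: (x =P i) => [->|_]; case: (z =P i) => [->|_] // /g0i.
        right; have := mul_sel C g0 i y; rewrite CG mxE -ey => <-.
        by rewrite eq_sym; move/eqP/negbTE: yi => ->.
      left => x z; rewrite /t.
      case: (x =P i) => [->|_]; case: (z =P i) => [->|_] // e.
      + by case/negP: nj; rewrite e codom_f.
      + by case/negP: nj; rewrite -e codom_f.
      + exact: g0i.
    case: tinj => [ti|c0].
      have Db : `|D| <= 2 := DA f0 t f0i ti.
      have Dn1 : `|D| != 1 := noone f0 t f0i ti.
      have : D = 0 \/ D = d0 \/ D = - d0 by lia.
      case=> [->|[->|->]]; [exists 0 | exists 1 | exists (-1)]; by rewrite ?mul0r ?mul1r ?mulN1r.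
    exists 0; apply/eqP; rewrite mul0r -(intr_eq0 R) De c0 mulr0.
    by [].
  exists e; apply: (mulfI (x := d0%:~R)); first by rewrite intr_eq0.
  by rewrite -De eD intrM mulrC.
have /fin_all_exists [Cf Cfe] : forall p : 'I_r * 'I_n, exists z : int, z%:~R = C p.1 p.2.
  by move=> [i j]; exact: Cint.
pose Cz : 'M[int]_(r, n) := \matrix_(i, j) Cf (i, j).
pose Gz : 'M[int]_(n, r) := \matrix_(a, l) ((a == g0 l)%:R).
have rC : Defs.realmx Cz = C.
  apply/matrixP => i j; rewrite mxE mxE; exact: (Cfe (i, j)).
have rG : Defs.realmx Gz = G by apply/matrixP => a l; rewrite !mxE; case: eqP.
have rA' : Defs.realmx ((1%:M - Gz *m Cz)^T) = (1%:M - G *m C)^T by rewrite rQ rC rG.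
exists ((1%:M - Gz *m Cz)^T); split; last by move=> Y; rewrite rA'; exact: (span_dual MK CJ CG).
move=> f g fi gi.
have ekr : (\rank (Defs.realmx ((1%:M - Gz *m Cz)^T)) + r)%N = n.
  by rewrite rA'; exact: rank_dual.
have [t [ti tb]] := minor_bound g0i fi gi ekr CG.
rewrite -(ler_int R) intr_norm -rdet rsub (congr1 (mxsub f g) rA').
apply: le_trans tb _.
have Db : `|\det (mxsub f0 t A)| <= 2 := DA f0 t f0i ti.
have d1 : 1 <= `|d0| by lia.
move: Db; rewrite -(ler_int R) intr_norm -rdet rsub key normrM d0e.
rewrite -(ler_int R) intr_norm in d1.
set x := `|\det (C *m sel t)|; set y := `|d0%:~R : R|.
have : 0 <= x by apply: normr_ge0.
move=> x0 xy; move: d1 xy; rewrite !mulrz_nat mulr1z -/y => d1 xy; nra.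
Qed.

Theorem corollary4p2 (E : finType) (I : {set {set E}}) :
  is_matroid I -> in_MDelta 2 I -> in_MDelta 2 (dual I).
Proof.
move=> hI [m [n [A [h [DA [hb hrep]]]]]].
have hinj := bij_inj hb.
have [f0 [g0 [f0i g0i A0u PD]]] := choose_basis A.
have [A' [DA' HA']] := construct DA f0i g0i A0u PD.
have frS (M : 'M[R]_(_, n)) X :
    free [seq col (h x) M | x <- enum X] <-> freeS M (h @: X).
  rewrite (_ : [seq col (h x) M | x <- enum X] = [seq col j M | j <- map h (enum X)]);
    last by rewrite -map_comp.
  rewrite (_ : h @: X = [set j in map h (enum X)]).
    by apply: free_freeS; rewrite map_inj_uniq // enum_uniq.
  apply/setP => a; rewrite inE; apply/imsetP/mapP => [] [x xX ->]; exists x => //.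
    by rewrite mem_enum.
  by rewrite mem_enum in xX.
have hrep' X : X \in I <-> freeS (Defs.realmx A) (h @: X).
  by rewrite -frS; exact: hrep.
exists n, n, A', h; split => //; split => // X.
rewrite frS HA'; exact: dual_span.
Qed.
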